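(* The map $R:[0,1]\to[0,1]$ is continuous at every point of $[0,1]\setminus(\mathscr D\setminus\{1\})$, and at every point of $\mathscr D\setminus\{1\}$ it is left-continuous but not continuous. Hence $R$ is a Borel function of Baire class $1$, i.e. a pointwise limit of continuous functions.
   Context: Define $\rho$ on binary words: for $b=b_1b_2\dots$, $\rho(b)$ is obtained by deleting every digit $b_n=0$ and replacing every $b_n=1$ by $0$ if $n$ is odd and by $1$ if $n$ is even. Let $\mathscr C$ be the set of infinite binary sequences with infinitely many $1$'s; for $x\in(0,1]$ let $\beta(x)\in\mathscr C$ be the unique binary expansion of $x$ with infinitely many $1$'s, i.e. $x=\sum_n\beta(x)_n2^{-n}$. Define $R:[0,1]\to[0,1]$ by $R(0)=2/3$ and, for $x\in(0,1]$, $R(x)=\sum_{n\ge1}c_n2^{-n}$ where $c=\rho(\beta(x))$ (an infinite binary sequence). $\mathscr D$ denotes the set of dyadic rationals in $[0,1]$. *)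

(* Defs.v *)
From Stdlib Require Import Reals Lra Lia ZArith ClassicalEpsilon.
From Coquelicot Require Import Coquelicot.
Open Scope R_scope.

(* Infinite binary words b = b_1 b_2 ... are represented as  w : nat -> bool
   with  w k  = the digit b_(k+1)  (0-based storage, 1-based positions). *)
Definition bit (d : bool) : R := if d then 1 else 0.

Definition word_value_is (w : nat -> bool) (x : R) : Prop :=
  is_series (fun k => bit (w k) / 2 ^ (S k)) x.

Definition word_value (w : nat -> bool) : R :=
  Series (fun k => bit (w k) / 2 ^ (S k)).

Definition inf_ones (w : nat -> bool) : Prop :=
  forall N, exists k, (N <= k)%nat /\ w k = true.

(* beta(x) : the (unique) binary expansion of x in (0,1] with infinitely many 1's *)
Definition beta (x : R) : nat -> bool :=
  epsilon (inhabits (fun _ => false))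
          (fun w => inf_ones w /\ word_value_is w x).

Fixpoint count_ones (w : nat -> bool) (n : nat) : nat :=
  match n with
  | O => O
  | S m => (count_ones w m + if w m then 1 else 0)%nat
  end.

Definition pos_one (w : nat -> bool) (k : nat) : nat :=
  epsilon (inhabits O) (fun n => w n = true /\ count_ones w n = k).

(* rho(b): delete the 0's, replace a 1 at (1-based) position n by 0 if n is odd
   and by 1 if n is even.  A 1 stored at index p sits at position p+1, which is
   even iff p is odd.  So the (k+1)-th digit of rho(b) is  Nat.odd (pos_one b k). *)
Definition rho (w : nat -> bool) : nat -> bool :=
  fun k => Nat.odd (pos_one w k).

Definition Rmap (x : R) : R :=
  if Req_EM_T x 0 then 2 / 3 else word_value (rho (beta x)).

Definition dyadic (x : R) : Prop :=
  exists (k : Z) (n : nat), x = IZR k / 2 ^ n.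

Definition in01 (x : R) : Prop := 0 <= x <= 1.

Definition cont_at01 (f : R -> R) (x : R) : Prop :=
  forall eps, 0 < eps -> exists delta, 0 < delta /\
    forall y, in01 y -> Rabs (y - x) < delta -> Rabs (f y - f x) < eps.

Definition left_cont_at01 (f : R -> R) (x : R) : Prop :=
  forall eps, 0 < eps -> exists delta, 0 < delta /\
    forall y, in01 y -> x - delta < y <= x -> Rabs (f y - f x) < eps.

Definition baire1_01 (f : R -> R) : Prop :=
  exists g : nat -> R -> R,
    (forall n x, in01 x -> cont_at01 (g n) x) /\
    (forall x, in01 x -> is_lim_seq (fun n => g n x) (f x)).

(* Main.v *)
Require Import Defs.
From Stdlib Require Import Reals Lra Lia ZArith ClassicalEpsilon Classical FunctionalExtensionality.
From Coquelicot Require Import Coquelicot.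
Open Scope R_scope.

Definition e (n : nat) : R := / 2 ^ n.

Lemma e_pos n : 0 < e n.
Proof. unfold e. apply Rinv_0_lt_compat, pow_lt; lra. Qed.

Lemma e_S n : e (S n) = e n / 2.
Proof. unfold e. simpl. field. apply pow_nonzero; lra. Qed.

Lemma e_0 : e 0 = 1.
Proof. unfold e; simpl; lra. Qed.

Lemma e_le n k : e (n + k) <= e n.
Proof.
  induction k. rewrite Nat.add_0_r; lra.
  rewrite Nat.add_succ_r, e_S. pose proof (e_pos (n+k)). lra.
Qed.

Lemma e_le' n m : (n <= m)%nat -> e m <= e n.
Proof. intros H. replace m with (n + (m - n))%nat by lia. apply e_le. Qed.

Lemma e_small eps : 0 < eps -> exists n, e n < eps.
Proof.
  intros H. destruct (pow_lt_1_zero (/2)) with (y := eps) as [N HN].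
  rewrite Rabs_pos_eq; lra. exact H.
  exists N. specialize (HN N (le_n N)). unfold e. rewrite <- pow_inv.
  rewrite Rabs_pos_eq in HN. exact HN. apply pow_le; lra.
Qed.

Lemma e_small_ge eps M : 0 < eps -> exists n, (M <= n)%nat /\ e n < eps.
Proof.
  intros H. destruct (e_small eps H) as [n Hn]. exists (M + n)%nat. split. lia.
  eapply Rle_lt_trans; [|exact Hn]. apply e_le'. lia.
Qed.

Fixpoint psum (w : nat -> bool) (n : nat) : R :=
  match n with O => 0 | S m => psum w m + bit (w m) * e (S m) end.

Fixpoint qn (w : nat -> bool) (n : nat) : nat :=
  match n with O => O | S m => (2 * qn w m + if w m then 1 else 0)%nat end.

Lemma bit_bounds b : 0 <= bit b <= 1.
Proof. destruct b; simpl; lra. Qed.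

Lemma psum_qn w n : psum w n = INR (qn w n) * e n.
Proof.
  induction n; cbn [psum qn]. simpl; lra.
  rewrite IHn, e_S. rewrite plus_INR, mult_INR.
  destruct (w n); simpl; lra.
Qed.

Lemma psum_mono w m k :
  psum w m <= psum w (m + k) /\ psum w (m + k) + e (m + k) <= psum w m + e m.
Proof.
  induction k. rewrite Nat.add_0_r; lra.
  rewrite Nat.add_succ_r. simpl psum. rewrite e_S.
  pose proof (e_pos (m+k)). pose proof (bit_bounds (w (m+k)%nat)).
  assert (0 <= bit (w (m+k)%nat) * (e (m+k)%nat/2) <= e (m+k)%nat/2) by nra. lra.
Qed.

Lemma psum_mono' w m n : (m <= n)%nat ->
  psum w m <= psum w n /\ psum w n + e n <= psum w m + e m.
Proof. intros H. replace n with (m + (n - m))%nat by lia. apply psum_mono. Qed.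

Lemma psum_bounds01 w n : 0 <= psum w n /\ psum w n + e n <= 1.
Proof. pose proof (psum_mono' w 0 n ltac:(lia)). simpl psum in H. rewrite e_0 in H. lra. Qed.

Lemma qn_unique a b n y :
  INR a * e n < y -> y <= INR a * e n + e n ->
  INR b * e n < y -> y <= INR b * e n + e n -> a = b.
Proof.
  intros. pose proof (e_pos n).
  destruct (Nat.lt_trichotomy a b) as [Hl|[Hl|Hl]]; auto.
  - apply le_INR in Hl. rewrite S_INR in Hl. nra.
  - apply le_INR in Hl. rewrite S_INR in Hl. nra.
Qed.

Lemma cv_le u l c N : Un_cv u l -> (forall j, (N <= j)%nat -> u j <= c) -> l <= c.
Proof.
  intros Hu Hc. destruct (Rle_dec l c) as [|Hn]; auto. exfalso.
  destruct (Hu (l - c)) as [M HM]. lra.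
  specialize (HM (max N M) ltac:(lia)). specialize (Hc (max N M) ltac:(lia)).
  unfold Rdist in HM. apply Rabs_def2 in HM. lra.
Qed.

Lemma cv_ge u l c N : Un_cv u l -> (forall j, (N <= j)%nat -> c <= u j) -> c <= l.
Proof.
  intros Hu Hc. destruct (Rle_dec c l) as [|Hn]; auto. exfalso.
  destruct (Hu (c - l)) as [M HM]. lra.
  specialize (HM (max N M) ltac:(lia)). specialize (Hc (max N M) ltac:(lia)).
  unfold Rdist in HM. apply Rabs_def2 in HM. lra.
Qed.

Lemma sum_psum w n : sum_f_R0 (fun k => bit (w k) / 2 ^ S k) n = psum w (S n).
Proof.
  induction n. simpl. unfold e. unfold Rdiv. simpl. lra.
  change (sum_f_R0 (fun k => bit (w k) / 2 ^ S k) n + bit (w (S n)) / 2 ^ S (S n) = psum w (S (S n))). rewrite IHn. reflexivity.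
Qed.

Lemma wvi_cv w x : word_value_is w x <-> Un_cv (psum w) x.
Proof.
  unfold word_value_is. rewrite is_series_Reals. unfold infinite_sum. split.
  - intros H eps Heps. destruct (H eps Heps) as [N HN]. exists (S N). intros n Hn.
    destruct n. lia. rewrite <- sum_psum. apply HN. lia.
  - intros H eps Heps. destruct (H eps Heps) as [N HN]. exists N. intros n Hn.
    rewrite sum_psum. apply HN. lia.
Qed.

Lemma wv_exists w : exists l, word_value_is w l.
Proof.
  destruct (growing_cv (psum w)) as [l Hl].
  - intro n. simpl. pose proof (e_pos (S n)). pose proof (bit_bounds (w n)). nra.
  - exists 1. intros y [n ->]. pose proof (psum_bounds01 w n). pose proof (e_pos n). lra.
  - exists l. apply wvi_cv. exact Hl.
Qed.

Lemma wv_bounds w l n : word_value_is w l -> psum w n <= l <= psum w n + e n.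
Proof.
  intros H. apply wvi_cv in H. split.
  - apply (cv_ge _ _ _ n H). intros j Hj. apply psum_mono'. auto.
  - apply (cv_le _ _ _ n H). intros j Hj. pose proof (psum_mono' w n j Hj). pose proof (e_pos j). lra.
Qed.

Lemma wv_eq w l : word_value_is w l -> word_value w = l.
Proof. intros H. apply is_series_unique. exact H. Qed.

Lemma wv_bounds' w n : psum w n <= word_value w <= psum w n + e n.
Proof. destruct (wv_exists w) as [l Hl]. rewrite (wv_eq _ _ Hl). apply wv_bounds; auto. Qed.

Lemma psum_agree w v n : (forall i, (i < n)%nat -> w i = v i) -> psum w n = psum v n.
Proof.
  induction n; intros H. reflexivity. simpl. rewrite IHn by (intros; apply H; lia).
  rewrite H by lia. reflexivity.
Qed.

Lemma wv_agree w v n : (forall i, (i < n)%nat -> w i = v i) ->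
  Rabs (word_value w - word_value v) <= e n.
Proof.
  intros H. pose proof (psum_agree w v n H). pose proof (wv_bounds' w n). pose proof (wv_bounds' v n).
  apply Rabs_le. lra.
Qed.

Lemma count_mono w n k : (count_ones w n <= count_ones w (n + k))%nat.
Proof. induction k. rewrite Nat.add_0_r; lia. rewrite Nat.add_succ_r. simpl. lia. Qed.

Lemma count_mono' w n m : (n <= m)%nat -> (count_ones w n <= count_ones w m)%nat.
Proof. intros H. replace m with (n + (m - n))%nat by lia. apply count_mono. Qed.

Lemma count_agree w v N : (forall i, (i < N)%nat -> w i = v i) ->
  forall n, (n <= N)%nat -> count_ones w n = count_ones v n.
Proof.
  intros H n. induction n; intros Hn. reflexivity. simpl. rewrite IHn by lia.
  rewrite H by lia. reflexivity.
Qed.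

Lemma count_large w k : inf_ones w -> exists N, (S k <= count_ones w N)%nat.
Proof.
  intros Hw. induction k.
  - destruct (Hw O) as [i [_ Hi]]. exists (S i). simpl. rewrite Hi. lia.
  - destruct IHk as [N HN]. destruct (Hw N) as [i [Hi1 Hi2]]. exists (S i). simpl.
    rewrite Hi2. pose proof (count_mono' w N i Hi1). lia.
Qed.

Lemma find_one w k N : (S k <= count_ones w N)%nat ->
  exists n, (n < N)%nat /\ w n = true /\ count_ones w n = k.
Proof.
  induction N; intros H. simpl in H. lia.
  destruct (le_lt_dec (S k) (count_ones w N)) as [Hl|Hl].
  - destruct (IHN Hl) as [n [? ?]]. exists n. split. lia. auto.
  - exists N. simpl in H. destruct (w N) eqn:E. split. lia. split; auto. lia. lia.
Qed.

Lemma one_unique w n n' k : w n = true -> count_ones w n = k ->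
  w n' = true -> count_ones w n' = k -> n = n'.
Proof.
  intros. destruct (Nat.lt_trichotomy n n') as [Hl|[Hl|Hl]]; auto; exfalso.
  - pose proof (count_mono' w (S n) n' Hl). simpl in H3. rewrite H in H3. lia.
  - pose proof (count_mono' w (S n') n Hl). simpl in H3. rewrite H1 in H3. lia.
Qed.

Lemma pos_one_spec w k : inf_ones w ->
  w (pos_one w k) = true /\ count_ones w (pos_one w k) = k.
Proof.
  intros Hw. unfold pos_one. apply epsilon_spec.
  destruct (count_large w k Hw) as [N HN]. destruct (find_one w k N HN) as [n [_ Hn]].
  exists n. exact Hn.
Qed.

Lemma pos_one_eq w k n : inf_ones w -> w n = true -> count_ones w n = k -> pos_one w k = n.
Proof.
  intros Hw H1 H2. destruct (pos_one_spec w k Hw). eapply one_unique; eauto.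
Qed.

Lemma rho_agree w v N : inf_ones w -> inf_ones v ->
  (forall i, (i < N)%nat -> w i = v i) ->
  forall k, (k < count_ones w N)%nat -> rho w k = rho v k.
Proof.
  intros Hw Hv H k Hk. unfold rho.
  destruct (pos_one_spec w k Hw) as [H1 H2]. set (n := pos_one w k) in *.
  assert (n < N)%nat.
  { destruct (le_lt_dec N n) as [Hl|Hl]; auto. pose proof (count_mono' w N n Hl). lia. }
  rewrite (pos_one_eq v k n Hv). reflexivity.
  rewrite <- H by auto. auto.
  rewrite <- (count_agree w v N H n) by lia. auto.
Qed.

Definition good (w : nat -> bool) (x : R) := inf_ones w /\ word_value_is w x.

Lemma good_bounds w x n : good w x -> psum w n < x <= psum w n + e n.
Proof.
  intros [Hw Hx]. pose proof (wv_bounds w x n Hx). split; [|lra].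
  destruct (Hw n) as [k [Hk1 Hk2]].
  pose proof (wv_bounds w x (S k) Hx). simpl in H0. rewrite Hk2 in H0. simpl bit in H0.
  pose proof (psum_mono' w n k Hk1). pose proof (e_pos (S k)). lra.
Qed.

Lemma good_prefix w x v y n : good w x -> good v y ->
  psum w n < y <= psum w n + e n -> forall i, (i < n)%nat -> v i = w i.
Proof.
  intros Hw Hv Hy.
  assert (Hq : forall m, (m <= n)%nat -> qn v m = qn w m).
  { intros m Hm. pose proof (psum_mono' w m n Hm). pose proof (good_bounds v y m Hv).
    rewrite !psum_qn in *. pose proof (e_pos n).
    apply (qn_unique _ _ m y); lra. }
  intros i Hi. pose proof (Hq i ltac:(lia)). pose proof (Hq (S i) ltac:(lia)).
  simpl in H0. destruct (v i), (w i); auto; lia.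
Qed.

Lemma good_unique w v x : good w x -> good v x -> v = w.
Proof.
  intros Hw Hv. apply functional_extensionality. intros i.
  apply (good_prefix w x v x (S i)); auto. apply good_bounds; auto.
Qed.

Lemma good_pos w x : good w x -> 0 < x <= 1.
Proof.
  intros H. pose proof (good_bounds w x 0 H). simpl in H0. rewrite e_0 in H0. lra.
Qed.

Fixpoint gS (x : R) (n : nat) : R :=
  match n with O => 0 | S m => let s := gS x m in
    if Rlt_dec (s + e (S m)) x then s + e (S m) else s end.

Definition gw (x : R) (n : nat) : bool :=
  if Rlt_dec (gS x n + e (S n)) x then true else false.

Lemma psum_gw x n : psum (gw x) n = gS x n.
Proof.
  induction n. reflexivity. simpl. rewrite IHn. unfold gw.
  destruct (Rlt_dec (gS x n + e (S n)) x); simpl; lra.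
Qed.

Lemma gS_inv x n : 0 < x <= 1 -> gS x n < x <= gS x n + e n.
Proof.
  intros Hx. induction n. simpl. rewrite e_0. lra.
  simpl. rewrite e_S in *. destruct (Rlt_dec (gS x n + e n / 2) x); lra.
Qed.

Lemma beta_good x : 0 < x <= 1 -> good (beta x) x.
Proof.
  intros Hx. unfold beta. apply epsilon_spec.
  exists (gw x). split.
  - intros N. apply NNPP. intros Hn.
    assert (Hz : forall k, (N <= k)%nat -> gw x k = false).
    { intros k Hk. destruct (gw x k) eqn:E; auto. exfalso. apply Hn. exists k; auto. }
    assert (Hc : forall k, psum (gw x) (N + k) = psum (gw x) N).
    { induction k. rewrite Nat.add_0_r; auto. rewrite Nat.add_succ_r. simpl. rewrite Hz by lia.
      simpl. lra. }
    pose proof (gS_inv x N Hx). rewrite <- psum_gw in H.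
    destruct (e_small (x - psum (gw x) N)) as [k Hk]. lra.
    pose proof (gS_inv x (N + k) Hx). rewrite <- psum_gw, Hc in H0.
    pose proof (e_le' k (N + k) ltac:(lia)). lra.
  - apply wvi_cv. intros eps Heps. destruct (e_small eps Heps) as [N HN]. exists N.
    intros n Hn. pose proof (gS_inv x n Hx). rewrite <- psum_gw in H.
    pose proof (e_le' N n Hn). unfold Rdist. rewrite Rabs_left1 by lra. lra.
Qed.

Lemma beta_eq w x : good w x -> beta x = w.
Proof.
  intros H. apply (good_unique w (beta x) x). auto. apply beta_good. eapply good_pos; eauto.
Qed.

Lemma Rmap_pos x : x <> 0 -> Rmap x = word_value (rho (beta x)).
Proof. intros H. unfold Rmap. destruct (Req_EM_T x 0); [contradiction|reflexivity]. Qed.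

Lemma local_close x eps : 0 < x <= 1 -> 0 < eps -> exists N,
  forall y, psum (beta x) N < y <= psum (beta x) N + e N -> Rabs (Rmap y - Rmap x) < eps.
Proof.
  intros Hx Heps. destruct (e_small eps Heps) as [c Hc].
  pose proof (beta_good x Hx) as Hb.
  destruct (count_large (beta x) c (proj1 Hb)) as [N HN]. exists N.
  intros y Hy. pose proof (psum_bounds01 (beta x) N).
  assert (Hy1 : 0 < y <= 1) by lra. pose proof (beta_good y Hy1) as Hby.
  pose proof (good_prefix _ _ _ _ N Hb Hby Hy) as Hpre.
  assert (Hr : forall k, (k < c)%nat -> rho (beta x) k = rho (beta y) k).
  { intros k Hk. apply (rho_agree _ _ N (proj1 Hb) (proj1 Hby)).
    intros i Hi. symmetry. auto. lia. }
  rewrite !Rmap_pos by lra. pose proof (wv_agree _ _ c Hr). rewrite Rabs_minus_sym. lra.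
Qed.

Lemma dyadic_grid w N : dyadic (psum w N + e N).
Proof.
  exists (Z.of_nat (qn w N) + 1)%Z, N. rewrite psum_qn. unfold e, Rdiv.
  rewrite plus_IZR, <- INR_IZR_INZ. ring.
Qed.

Lemma dyadic0 : dyadic 0.
Proof. exists 0%Z, O. unfold Rdiv. simpl. ring. Qed.

Lemma cont1 x : in01 x -> ~ (dyadic x /\ x <> 1) -> cont_at01 Rmap x.
Proof.
  intros Hx Hnd. assert (Hx0 : x <> 0).
  { intros ->. apply Hnd. split. apply dyadic0. lra. }
  unfold in01 in Hx.
  intros eps Heps. destruct (local_close x eps ltac:(lra) Heps) as [N HN].
  pose proof (good_bounds _ _ N (beta_good x ltac:(lra))) as Hb.
  set (s := psum (beta x) N) in *.
  destruct (Req_dec x 1) as [H1|H1].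
  - exists (x - s). split. lra. intros y Hy Hyx. apply HN. unfold in01 in Hy.
    apply Rabs_def2 in Hyx. lra.
  - assert (x < s + e N).
    { destruct Hb as [_ Hb]. destruct Hb as [Hb|Hb]; auto. exfalso. apply Hnd. split; auto.
      rewrite Hb. apply dyadic_grid. }
    exists (Rmin (x - s) (s + e N - x)). split. apply Rmin_pos; lra.
    intros y Hy Hyx. apply HN. apply Rabs_def2 in Hyx.
    pose proof (Rmin_l (x - s) (s + e N - x)). pose proof (Rmin_r (x - s) (s + e N - x)). lra.
Qed.

Lemma leftcont x : in01 x -> left_cont_at01 Rmap x.
Proof.
  intros Hx eps Heps. unfold in01 in Hx. destruct (Req_dec x 0) as [H0|H0].
  - exists 1. split. lra. intros y Hy Hyx. unfold in01 in Hy.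
    assert (y = x) by lra. subst y. rewrite Rminus_diag, Rabs_R0. auto.
  - destruct (local_close x eps ltac:(lra) Heps) as [N HN].
    pose proof (good_bounds _ _ N (beta_good x ltac:(lra))) as Hb.
    exists (x - psum (beta x) N). split. lra. intros y Hy Hyx. apply HN. lra.
Qed.

Definition wm (z : nat -> bool) (M m : nat) (i : nat) : bool :=
  if Nat.ltb i M then z i else if Nat.ltb i m then false else true.

Lemma tail_ones w m : (forall i, (m <= i)%nat -> w i = true) ->
  word_value_is w (psum w m + e m).
Proof.
  intros H. assert (Ht : forall t, psum w (m + t) = psum w m + e m - e (m + t)).
  { induction t. rewrite Nat.add_0_r; ring. rewrite Nat.add_succ_r. simpl.
    rewrite IHt, H by lia. rewrite e_S. simpl. field. }
  apply wvi_cv. intros eps Heps. destruct (e_small_ge eps m Heps) as [N [HN1 HN2]].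
  exists N. intros n Hn. replace n with (m + (n - m))%nat by lia. rewrite Ht.
  unfold Rdist. pose proof (e_pos (m + (n - m))). rewrite Rabs_left1 by lra.
  pose proof (e_le' N (m + (n - m)) ltac:(lia)). lra.
Qed.

Lemma wm_inf z M m : inf_ones (wm z M m).
Proof.
  intros N. exists (max N (max m M)). split. lia. unfold wm.
  destruct (Nat.ltb_spec (max N (max m M)) M). lia.
  destruct (Nat.ltb_spec (max N (max m M)) m). lia. auto.
Qed.

Lemma wm_psum z M m : (M <= m)%nat -> psum (wm z M m) m = psum z M.
Proof.
  intros Hm. assert (HM : psum (wm z M m) M = psum z M).
  { apply psum_agree. intros i Hi. unfold wm. destruct (Nat.ltb_spec i M); auto; lia. }
  assert (Ht : forall t, (M + t <= m)%nat -> psum (wm z M m) (M + t) = psum z M).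
  { induction t; intros Ht. rewrite Nat.add_0_r; auto. rewrite Nat.add_succ_r. simpl.
    rewrite IHt by lia. unfold wm. destruct (Nat.ltb_spec (M + t) M). lia.
    destruct (Nat.ltb_spec (M + t) m). simpl; ring. lia. }
  replace m with (M + (m - M))%nat at 2 by lia. apply Ht. lia.
Qed.

Lemma wm_good z M m : (M <= m)%nat -> good (wm z M m) (psum z M + e m).
Proof.
  intros Hm. split. apply wm_inf. rewrite <- (wm_psum z M m Hm). apply tail_ones.
  intros i Hi. unfold wm. destruct (Nat.ltb_spec i M). lia. destruct (Nat.ltb_spec i m). lia. auto.
Qed.

Lemma wm_count z M m : (M <= m)%nat -> forall j,
  count_ones (wm z M m) (m + j) = (count_ones z M + j)%nat.
Proof.
  intros Hm. assert (HM : count_ones (wm z M m) M = count_ones z M).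
  { apply (count_agree _ _ M). intros i Hi. unfold wm. destruct (Nat.ltb_spec i M); auto; lia. lia. }
  assert (Ht : forall t, (M + t <= m)%nat -> count_ones (wm z M m) (M + t) = count_ones z M).
  { induction t; intros Ht. rewrite Nat.add_0_r; auto. rewrite Nat.add_succ_r. simpl.
    rewrite IHt by lia. unfold wm. destruct (Nat.ltb_spec (M + t) M). lia.
    destruct (Nat.ltb_spec (M + t) m). lia. lia. }
  induction j. rewrite !Nat.add_0_r. pose proof (Ht (m - M)%nat ltac:(lia)) as Hq. replace (M + (m - M))%nat with m in Hq by lia. exact Hq.
  rewrite !Nat.add_succ_r. simpl. rewrite IHj. unfold wm.
  destruct (Nat.ltb_spec (m + j) M). lia. destruct (Nat.ltb_spec (m + j) m). lia. lia.
Qed.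

Lemma wm_rho z M m : (M <= m)%nat -> forall j,
  rho (wm z M m) (count_ones z M + j) = Nat.odd (m + j).
Proof.
  intros Hm j. unfold rho. rewrite (pos_one_eq _ _ (m + j)). reflexivity. apply wm_inf.
  unfold wm. destruct (Nat.ltb_spec (m + j) M). lia. destruct (Nat.ltb_spec (m + j) m). lia. auto.
  apply wm_count; auto.
Qed.

Lemma psum4 u c : psum u (S (S (S (S c)))) = psum u c + bit (u c) * e (S c)
  + bit (u (S c)) * e (S (S c)) + bit (u (S (S c))) * e (S (S (S c)))
  + bit (u (S (S (S c)))) * e (S (S (S (S c)))).
Proof. simpl. ring. Qed.

Lemma odd_even_shift K j : Nat.odd (2 * K + j) = Nat.odd j.
Proof. rewrite Nat.add_comm. apply Nat.odd_add_mul_2. Qed.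

Lemma wm_gap z M K : (M <= 2 * K)%nat ->
  word_value (rho (wm z M (S (2 * K)))) - word_value (rho (wm z M (2 * K)))
    >= e (count_ones z M) / 4.
Proof.
  intros HK. set (c := count_ones z M).
  set (u := rho (wm z M (2 * K))). set (v := rho (wm z M (S (2 * K)))).
  assert (Hag : forall k, (k < c)%nat -> u k = v k).
  { intros k Hk. apply (rho_agree _ _ M (wm_inf _ _ _) (wm_inf _ _ _)).
    intros i Hi. unfold wm. destruct (Nat.ltb_spec i M); auto; lia.
    replace (count_ones (wm z M (2 * K)) M) with c. auto.
    symmetry. apply (count_agree _ _ M). intros i Hi. unfold wm.
    destruct (Nat.ltb_spec i M); auto; lia. lia. }
  assert (HP : psum u c = psum v c) by (apply psum_agree; auto).
  assert (Hu : forall j, u (c + j)%nat = Nat.odd j).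
  { intros j. unfold u, c. rewrite wm_rho by lia. apply odd_even_shift. }
  assert (Hv : forall j, v (c + j)%nat = Nat.odd (S j)).
  { intros j. unfold v, c. rewrite wm_rho by lia. replace (S (2 * K) + j)%nat with (2 * K + S j)%nat by lia.
    apply odd_even_shift. }
  pose proof (wv_bounds' u (S (S (S (S c))))). pose proof (wv_bounds' v (S (S (S (S c))))).
  rewrite psum4 in H, H0.
  pose proof (Hu 0%nat) as U0. pose proof (Hu 1%nat) as U1. pose proof (Hu 2%nat) as U2. pose proof (Hu 3%nat) as U3.
  pose proof (Hv 0%nat) as V0. pose proof (Hv 1%nat) as V1. pose proof (Hv 2%nat) as V2. pose proof (Hv 3%nat) as V3.
  replace (c + 0)%nat with c in U0, V0 by lia.
  replace (c + 1)%nat with (S c) in U1, V1 by lia.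
  replace (c + 2)%nat with (S (S c)) in U2, V2 by lia.
  replace (c + 3)%nat with (S (S (S c))) in U3, V3 by lia.
  rewrite U0, U1, U2, U3 in H. rewrite V0, V1, V2, V3 in H0. simpl bit in H, H0.
  rewrite !e_S in H, H0. pose proof (e_pos c). lra.
Qed.

Lemma not_cont x : in01 x -> dyadic x -> x <> 1 -> ~ cont_at01 Rmap x.
Proof.
  intros Hx [k [M HkM]] Hx1 Hc. unfold in01 in Hx.
  assert (Hx' : x = IZR k * e M) by (rewrite HkM; reflexivity).
  pose proof (e_pos M) as HeM.
  assert (He2 : 2 ^ M * e M = 1). { unfold e. field. apply pow_nonzero; lra. }
  assert (Hk : IZR k + 1 <= 2 ^ M).
  { assert (IZR k < 2 ^ M) by nra. replace 2 with (IZR 2) in * by reflexivity.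
    rewrite pow_IZR in *. apply lt_IZR in H. rewrite <- plus_IZR. apply IZR_le. lia. }
  assert (Hk0 : 0 <= IZR k) by nra.
  assert (HX : 0 < x + e M <= 1) by nra.
  set (z := beta (x + e M)). pose proof (beta_good _ HX) as Hz. fold z in Hz.
  assert (Hpz : psum z M = x).
  { pose proof (good_bounds _ _ M Hz) as Hb. rewrite psum_qn in *. rewrite Hx' in *.
    assert (INR (qn z M) < IZR k + 1) by nra. assert (IZR k <= INR (qn z M)) by nra.
    rewrite INR_IZR_INZ in *. rewrite <- plus_IZR in H. apply lt_IZR in H. apply le_IZR in H0.
    assert (k = Z.of_nat (qn z M)) by lia. rewrite H1. reflexivity. }
  assert (Hy : forall m, (M <= m)%nat -> Rmap (x + e m) = word_value (rho (wm z M m)) /\ in01 (x + e m)).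
  { intros m Hm. pose proof (e_pos m). pose proof (e_le' M m Hm). split.
    rewrite Rmap_pos by lra. rewrite <- Hpz. rewrite (beta_eq _ _ (wm_good z M m Hm)). reflexivity.
    unfold in01; lra. }
  set (c := count_ones z M).
  destruct (Hc (e c / 8)) as [d [Hd Hd2]]. pose proof (e_pos c); lra.
  destruct (e_small_ge d M Hd) as [K [HK1 HK2]].
  assert (HK3 : (M <= 2 * K)%nat) by lia.
  pose proof (e_le' K (2 * K) ltac:(lia)). pose proof (e_le' (2 * K) (S (2 * K)) ltac:(lia)).
  pose proof (e_pos (2 * K)). pose proof (e_pos (S (2 * K))).
  destruct (Hy (2 * K)%nat HK3) as [R1 I1]. destruct (Hy (S (2 * K)) ltac:(lia)) as [R2 I2].
  pose proof (Hd2 _ I1). pose proof (Hd2 _ I2).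
  rewrite R1 in H3. rewrite R2 in H4.
  replace (x + e (2 * K) - x) with (e (2 * K)) in H3 by ring.
  replace (x + e (S (2 * K)) - x) with (e (S (2 * K))) in H4 by ring.
  rewrite Rabs_pos_eq in H3, H4 by lra.
  specialize (H3 ltac:(lra)). specialize (H4 ltac:(lra)).
  pose proof (wm_gap z M K HK3). fold c in H5.
  apply Rabs_def2 in H3. apply Rabs_def2 in H4. lra.
Qed.

Definition hat (t : R) : R := Rmax 0 (1 - Rabs t).
Definition NN (n : nat) : nat := Nat.pow 2 n.
Definition g (n : nat) (x : R) : R :=
  sum_f_R0 (fun k => Rmap (INR k * e n) * hat (2 ^ n * x - INR k)) (NN n).

Lemma INR_NN n : INR (NN n) = 2 ^ n.
Proof. unfold NN. rewrite pow_INR. simpl. replace (1+1) with 2 by ring. reflexivity. Qed.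

Lemma hat_lip a b : Rabs (hat a - hat b) <= Rabs (a - b).
Proof.
  unfold hat, Rmax. repeat destruct Rle_dec; unfold Rabs in *; repeat destruct Rcase_abs; lra.
Qed.

Lemma hat_zero t : (t <= -1 \/ 1 <= t) -> hat t = 0.
Proof. intros H. unfold hat, Rmax. destruct Rle_dec; auto. unfold Rabs in *. destruct Rcase_abs; lra. Qed.

Lemma hat_in t : 0 <= t <= 1 -> hat t = 1 - t.
Proof. intros H. unfold hat, Rmax. rewrite Rabs_pos_eq by lra. destruct Rle_dec; lra. Qed.

Lemma hat_in' t : -1 <= t <= 0 -> hat t = 1 + t.
Proof. intros H. unfold hat, Rmax. rewrite Rabs_left1 by lra. destruct Rle_dec; lra. Qed.

Lemma sum_lip (f : nat -> R -> R) (L : nat -> R) x y N :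
  (forall k, Rabs (f k x - f k y) <= L k * Rabs (x - y)) ->
  Rabs (sum_f_R0 (fun k => f k x) N - sum_f_R0 (fun k => f k y) N) <= sum_f_R0 L N * Rabs (x - y).
Proof.
  intros H. induction N; simpl. apply H.
  replace (sum_f_R0 (fun k => f k x) N + f (S N) x - (sum_f_R0 (fun k => f k y) N + f (S N) y))
    with ((sum_f_R0 (fun k => f k x) N - sum_f_R0 (fun k => f k y) N) + (f (S N) x - f (S N) y)) by ring.
  eapply Rle_trans. apply Rabs_triang. specialize (H (S N)). lra.
Qed.

Lemma g_cont n x : cont_at01 (g n) x.
Proof.
  intros eps Heps.
  set (L := fun k : nat => Rabs (Rmap (INR k * e n)) * 2 ^ n).
  assert (HL : 0 <= sum_f_R0 L (NN n)).
  { apply cond_pos_sum. intros k. unfold L. apply Rmult_le_pos. apply Rabs_pos. apply pow_le; lra. }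
  exists (eps / (sum_f_R0 L (NN n) + 1)). split. apply Rdiv_lt_0_compat; lra.
  intros y _ Hy. unfold g.
  pose proof (sum_lip (fun k z => Rmap (INR k * e n) * hat (2 ^ n * z - INR k)) L y x (NN n)) as Hs.
  assert (Hd : eps / (sum_f_R0 L (NN n) + 1) * (sum_f_R0 L (NN n) + 1) = eps) by (field; lra).
  eapply Rle_lt_trans. apply Hs.
  - intros k. unfold L. rewrite <- Rmult_minus_distr_l, Rabs_mult. rewrite Rmult_assoc.
    apply Rmult_le_compat_l. apply Rabs_pos.
    eapply Rle_trans. apply hat_lip.
    replace (2 ^ n * y - INR k - (2 ^ n * x - INR k)) with (2 ^ n * (y - x)) by ring.
    rewrite Rabs_mult, (Rabs_pos_eq (2 ^ n)) by (apply pow_le; lra). lra.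
  - pose proof (Rabs_pos (y - x)). nra.
Qed.

Lemma g_formula n x j th : 0 <= th <= 1 -> (S j <= NN n)%nat -> 2 ^ n * x = INR j + th ->
  g n x = (1 - th) * Rmap (INR j * e n) + th * Rmap (INR (S j) * e n).
Proof.
  intros Hth Hj Hx. unfold g. rewrite Hx.
  set (a := fun k => Rmap (INR k * e n)).
  change (sum_f_R0 (fun k => a k * hat (INR j + th - INR k)) (NN n) = (1 - th) * a j + th * a (S j)).
  assert (Hm : forall m, sum_f_R0 (fun k => a k * hat (INR j + th - INR k)) m =
     if (m <? j)%nat then 0 else if (m =? j)%nat then (1 - th) * a j else (1 - th) * a j + th * a (S j)).
  { induction m.
    - cbn [sum_f_R0]. destruct j. simpl. replace (INR 0 + th - INR 0) with th by (simpl; ring). rewrite hat_in by lra. ring.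
      rewrite hat_zero. change (0 <? S j)%nat with true. cbv iota. ring. right. rewrite S_INR. pose proof (pos_INR j). change (INR 0) with 0. lra.
    - cbn [sum_f_R0]. rewrite IHm.
      destruct (Nat.ltb_spec m j); destruct (Nat.ltb_spec (S m) j); destruct (Nat.eqb_spec m j);
        destruct (Nat.eqb_spec (S m) j); try lia.
      + rewrite hat_zero. ring. right. assert (S (S m) <= j)%nat as H2 by lia. apply le_INR in H2. rewrite !S_INR in *. lra.
      + subst j. rewrite hat_in by lra. replace (INR (S m) + th - INR (S m)) with th by ring. ring.
      + subst m. rewrite hat_in'. rewrite S_INR. ring. rewrite S_INR; lra.
      + rewrite hat_zero. ring. left. assert (S (S j) <= S m)%nat as H3 by lia. apply le_INR in H3.
        rewrite !S_INR in *. lra. }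
  rewrite Hm. destruct (Nat.ltb_spec (NN n) j). lia. destruct (Nat.eqb_spec (NN n) j). lia. reflexivity.
Qed.

Lemma g_int n x m : 0 <= x <= 1 -> 2 ^ n * x = IZR m -> g n x = Rmap x.
Proof.
  intros Hx Hm. pose proof (INR_NN n) as HN. pose proof (e_pos n) as He.
  assert (He2 : 2 ^ n * e n = 1). { unfold e. field. apply pow_nonzero; lra. }
  destruct (Req_dec x 1) as [H1|H1].
  - assert (HN1 : (1 <= NN n)%nat). { unfold NN. pose proof (Nat.pow_nonzero 2 n). lia. }
    rewrite (g_formula n x (pred (NN n)) 1). replace (S (pred (NN n))) with (NN n) by lia.
    rewrite HN, He2, H1. ring. lra. lia.
    rewrite <- S_INR. replace (S (pred (NN n))) with (NN n) by lia. rewrite HN, H1. ring.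
  - assert (0 <= IZR m) by nra. apply le_IZR in H.
    assert (IZR m < 2 ^ n) by nra. rewrite <- HN, INR_IZR_INZ in H0. apply lt_IZR in H0.
    rewrite (g_formula n x (Z.to_nat m) 0). rewrite INR_IZR_INZ, Z2Nat.id by lia.
    rewrite <- Hm. replace (2 ^ n * x * e n) with x. ring. replace (2 ^ n * x * e n) with ((2 ^ n * e n) * x) by ring. rewrite He2. ring.
    lra. lia. rewrite INR_IZR_INZ, Z2Nat.id by lia. lra.
Qed.

Lemma decomp n x : 0 <= x < 1 -> exists j th, 0 <= th <= 1 /\ (S j <= NN n)%nat /\ 2 ^ n * x = INR j + th.
Proof.
  intros Hx. pose proof (INR_NN n) as HN. pose proof (pow_lt 2 n ltac:(lra)).
  destruct (archimed (2 ^ n * x)) as [A B].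
  set (z := up (2 ^ n * x)) in *.
  assert (0 < IZR z) by nra. apply lt_IZR in H0.
  assert (IZR z < IZR (Z.of_nat (NN n)) + 1) by (rewrite <- INR_IZR_INZ; nra).
  rewrite <- plus_IZR in H1. apply lt_IZR in H1.
  exists (Z.to_nat (z - 1)), (2 ^ n * x - INR (Z.to_nat (z - 1))).
  rewrite INR_IZR_INZ, Z2Nat.id by lia. rewrite minus_IZR. split. lra. split. lia. ring.
Qed.

Lemma dyadic1 : dyadic 1.
Proof. exists 1%Z, O. unfold Rdiv. simpl. field. Qed.
Lemma convex_close a b c th eps : 0 <= th <= 1 -> Rabs (a - c) < eps -> Rabs (b - c) < eps ->
  Rabs ((1 - th) * a + th * b - c) < eps.
Proof.
  intros Hth Ha Hb. apply Rabs_def2 in Ha. apply Rabs_def2 in Hb.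
  assert (E : (1 - th) * a + th * b - c = (1 - th) * (a - c) + th * (b - c)) by ring.
  rewrite E. apply Rabs_def1.
  - assert (0 <= (1 - th) * (eps - (a - c))) by nra. assert (0 <= th * (eps - (b - c))) by nra.
    destruct (Req_dec th 0). subst. nra. assert (0 < th * (eps - (b - c))) by nra. nra.
  - assert (0 <= (1 - th) * (eps + (a - c))) by nra. assert (0 <= th * (eps + (b - c))) by nra.
    destruct (Req_dec th 0). subst. nra. assert (0 < th * (eps + (b - c))) by nra. nra.
Qed.

Lemma g_conv x : in01 x -> is_lim_seq (fun n => g n x) (Rmap x).
Proof.
  intros Hx. apply is_lim_seq_Reals. unfold in01 in Hx.
  destruct (classic (dyadic x)) as [[k [M HM]]|Hnd].
  - intros eps Heps. exists M. intros n Hn. rewrite (g_int n x (k * 2 ^ Z.of_nat (n - M))%Z Hx).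
    unfold Rdist. rewrite Rminus_diag, Rabs_R0. lra.
    rewrite mult_IZR, <- pow_IZR, HM. replace n with (M + (n - M))%nat at 1 by lia.
    rewrite pow_add. simpl IZR. field. apply pow_nonzero; lra.
  - assert (Hx1 : x <> 1) by (intros ->; apply Hnd, dyadic1).
    assert (Hc : cont_at01 Rmap x) by (apply cont1; [unfold in01; lra| tauto]).
    intros eps Heps. destruct (Hc eps Heps) as [d [Hd Hd2]].
    destruct (e_small d Hd) as [N HN]. exists N. intros n Hn.
    destruct (decomp n x ltac:(lra)) as [j [th [Hth [Hj Hjx]]]].
    rewrite (g_formula n x j th Hth Hj Hjx).
    pose proof (e_pos n). pose proof (e_le' N n Hn).
    assert (He2 : 2 ^ n * e n = 1). { unfold e. field. apply pow_nonzero; lra. }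
    assert (Hp : INR j * e n - x = - th * e n).
    { replace (INR j) with (2 ^ n * x - th) by lra. replace ((2 ^ n * x - th) * e n) with ((2 ^ n * e n) * x - th * e n) by ring. rewrite He2. ring. }
    assert (Hq : INR (S j) * e n - x = (1 - th) * e n).
    { rewrite S_INR. replace (INR j) with (2 ^ n * x - th) by lra. replace ((2 ^ n * x - th + 1) * e n) with ((2 ^ n * e n) * x - th * e n + e n) by ring. rewrite He2. ring. }
    assert (Hb : INR (S j) * e n <= 1).
    { apply le_INR in Hj. rewrite INR_NN in Hj. pose proof (pos_INR (S j)). nra. }
    pose proof (pos_INR j).
    assert (G1 : Rabs (Rmap (INR j * e n) - Rmap x) < eps).
    { apply Hd2. unfold in01. split. nra. rewrite S_INR in Hb. nra.
      rewrite Hp. rewrite Rabs_left1 by nra. nra. }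
    assert (G2 : Rabs (Rmap (INR (S j) * e n) - Rmap x) < eps).
    { apply Hd2. unfold in01. split. pose proof (pos_INR (S j)). nra. lra.
      rewrite Hq. rewrite Rabs_pos_eq by nra. nra. }
    unfold Rdist. apply convex_close; auto.
Qed.

Theorem proposition3p1 :
  (forall x, in01 x -> ~ (dyadic x /\ x <> 1) -> cont_at01 Rmap x) /\
  (forall x, in01 x -> dyadic x -> x <> 1 ->
     left_cont_at01 Rmap x /\ ~ cont_at01 Rmap x) /\
  baire1_01 Rmap.
Proof.
  split. exact cont1.
  split. intros x Hx Hd H1. split. apply leftcont; auto. apply not_cont; auto.
  exists g. split. intros n x _. apply g_cont. exact g_conv.
Qed.
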